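(* Let $A$ be a general metric space, $N$ a right module on $A$ and $\mathcal F$ a filter on $A$. Then $\inf_{x\in A}\big(M^-(\mathcal F)(x)+N(x)\big)\ \ge\ \lim^-_{\mathcal F}N$. If moreover $\mathcal F$ is weakly flat, this inequality is an equality.
   Context: $[0,\infty]$ with $+$ ($x+\infty=\infty$), $\inf\emptyset=\infty$, $\sup\emptyset=0$. A general metric space $A$ is a set with $A(-,-):A\times A\to[0,\infty]$, $A(x,x)=0$, $A(x,z)\le A(x,y)+A(y,z)$ (no symmetry). A right module on $A$ is $N:A\to[0,\infty]$ with $N(y)\le A(x,y)+N(x)$ for all $x,y$. A filter on $A$ is a nonempty set of nonempty subsets closed under finite intersections and supersets. For $t:A\to[0,\infty]$, $\lim^+_{\mathcal F}t=\inf_{f\in\mathcal F}\sup_{x\in f}t(x)$ and $\lim^-_{\mathcal F}t=\sup_{f\in\mathcal F}\inf_{x\in f}t(x)$. $M^-(\mathcal F)(x)=\lim^-_{y\in\mathcal F}A(x,y)$. $\mathcal F$ is weakly flat iff $\lim^+_{\mathcal F}M^-(\mathcal F)=0$. *)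

(* Defs.v *)
(* [0,oo] is modelled as the nonnegative part of \bar R
   for an arbitrary R : realType. *)
From HB Require Import structures.
From mathcomp Require Import all_boot all_order all_algebra.
From mathcomp Require Import all_classical all_reals ereal.
Set Implicit Arguments. Unset Strict Implicit. Unset Printing Implicit Defensive.
Import Order.TTheory GRing.Theory Num.Theory.
Local Open Scope classical_set_scope.
Local Open Scope ereal_scope.

Definition gen_metric {R : realType} {A : Type} (d : A -> A -> \bar R) : Prop :=
  [/\ forall x y, 0 <= d x y,
      forall x, d x x = 0 &
      forall x y z, d x z <= d x y + d y z].

Definition right_module {R : realType} {A : Type} (d : A -> A -> \bar R)
  (N : A -> \bar R) : Prop :=
  (forall x, 0 <= N x) /\ (forall x y, N y <= d x y + N x).

Definition is_filter {A : Type} (F : set (set A)) : Prop :=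
  [/\ exists f, F f,
      forall f, F f -> f !=set0,
      forall f g, F f -> F g -> F (f `&` g) &
      forall f g, F f -> f `<=` g -> F g].

Definition lim_plus {R : realType} {A : Type} (F : set (set A)) (t : A -> \bar R)
  : \bar R := ereal_inf [set ereal_sup (t @` f) | f in F].

Definition lim_minus {R : realType} {A : Type} (F : set (set A)) (t : A -> \bar R)
  : \bar R := ereal_sup [set ereal_inf (t @` f) | f in F].

Definition Mminus {R : realType} {A : Type} (d : A -> A -> \bar R)
  (F : set (set A)) (x : A) : \bar R := lim_minus F (fun y => d x y).

Definition weakly_flat {R : realType} {A : Type} (d : A -> A -> \bar R)
  (F : set (set A)) : Prop := lim_plus F (Mminus d F) = 0.

(* Main.v *)
Require Import Defs.
From HB Require Import structures.
From mathcomp Require Import all_boot all_order all_algebra.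
From mathcomp Require Import all_classical all_reals ereal.
Import Order.TTheory GRing.Theory Num.Theory.
Local Open Scope classical_set_scope.
Local Open Scope ereal_scope.

Theorem mainTheorem9 (R : realType) (A : Type) (d : A -> A -> \bar R)
  (N : A -> \bar R) (F : set (set A)) :
  gen_metric d -> right_module d N -> is_filter F ->
  lim_minus F N <= ereal_inf [set Mminus d F x + N x | x in [set: A]] /\
  (weakly_flat d F ->
   ereal_inf [set Mminus d F x + N x | x in [set: A]] = lim_minus F N).
Proof.
move=> [d0 dxx dtri] [N0 NN] [[f0 Ff0] Fne FI FS].
set I := ereal_inf _.
have part1 : lim_minus F N <= I.
  apply: ge_ereal_sup => _ [f Ff <-].
  apply: le_ereal_inf_tmp => _ [x _ <-].
  have infM : ereal_inf ((fun y => d x y) @` f) <= Mminus d F x.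
    by apply: ereal_sup_ubound; exists f.
  have M0 : 0 <= Mminus d F x.
    apply: le_trans infM; apply: le_ereal_inf_tmp => _ [y _ <-]; exact: d0.
  case EN: (N x) => [r| |].
  - rewrite -leeBlDr //; apply: le_trans infM.
    apply: le_ereal_inf_tmp => _ [y fy <-].
    rewrite leeBlDr //; rewrite -EN.
    apply: le_trans (NN x y).
    by apply: ereal_inf_lbound; exists y.
  - rewrite addey ?leey //.
    by apply/negP => /eqP Mi; move: M0; rewrite Mi.
  - by have := N0 x; rewrite EN.
split => // wf.
apply/le_anti; rewrite part1 andbT.
apply/lee_addgt0Pr => e e0.
have : lim_plus F (Mminus d F) < e%:E by rewrite wf lte_fin.
move=> /ereal_inf_lt [_ [g Fg <-] supg].
apply: (@le_trans _ _ (ereal_inf (N @` g) + e%:E)); last first.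
  by apply: leeD2r; apply: ereal_sup_ubound; exists g.
rewrite -leeBlDr //; apply: le_ereal_inf_tmp => _ [y gy <-].
rewrite leeBlDr //.
apply: (@le_trans _ _ (Mminus d F y + N y)).
  by apply: ereal_inf_lbound; exists y.
rewrite addeC; apply: leeD2l.
apply: le_trans (ltW supg).
by apply: ereal_sup_ubound; exists y.
Qed.
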